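(* Let $p$ be a prime number and let $n=p_1^{\alpha_1}\cdots p_r^{\alpha_r}$ ($r\ge 1$) be the prime factorization of an integer $n>1$, with distinct primes $p_i$ and exponents $\alpha_i\ge 1$. Then $n$ is $p$-multiplicatively $e$-perfect (i.e. $T_e(n)=n^p$) if and only if for each $i\in\{1,\dots,r\}$ we have $$\sigma(\alpha_i)=\gcd(\alpha_i,\sigma(\alpha_i))\,p\quad\text{and}\quad \alpha_i=\gcd(\alpha_i,\sigma(\alpha_i))\prod_{j\in\{1,\dots,r\}\setminus\{i\}}d(\alpha_j),$$ with $$2^{r-1}\le \prod_{j\in\{1,\dots,r\}\setminus\{i\}}d(\alpha_j)<p,$$ where the empty product is $1$. In particular, if $r=1$, then $\alpha_1\mid\sigma(\alpha_1)$ and $\sigma(\alpha_1)=\alpha_1 p$.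
   Context: $\sigma(m)$ is the sum and $d(m)$ the number of positive divisors of $m$. For $n=p_1^{a_1}\cdots p_r^{a_r}>1$, a divisor $d=p_1^{b_1}\cdots p_r^{b_r}$ of $n$ is an exponential divisor ($e$-divisor) if $b_i\mid a_i$ for all $i$; $T_e(n)$ denotes the product of all $e$-divisors of $n$. One has $T_e(n)=\prod_{i=1}^r p_i^{\sigma(a_i)\prod_{j\ne i}d(a_j)}$. *)

(* Defs.v *)
From mathcomp Require Import all_boot.
Set Implicit Arguments. Unset Strict Implicit. Unset Printing Implicit Defensive.

Definition sigma (m : nat) : nat := \sum_(d <- divisors m) d.

Definition ndiv (m : nat) : nat := size (divisors m).

Definition ediv (d n : nat) : bool :=
  (d %| n) && all (fun q => logn q d %| logn q n) (primes n).

Definition Te (n : nat) : nat := \prod_(d <- divisors n | ediv d n) d.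

(* Main.v *)
Require Import Defs.
From mathcomp Require Import all_boot zify.
Set Implicit Arguments. Unset Strict Implicit.

Definition E n := [seq d <- divisors n | ediv d n].

Lemma memE n d : 0 < n -> (d \in E n) = ediv d n.
Proof.
move=> n0; rewrite mem_filter /ediv -dvdn_divisors //.
by case: (d %| n); rewrite ?andbF ?andbT.
Qed.

Lemma E_decomp q a m : prime q -> 0 < a -> 0 < m -> ~~ (q %| m) ->
  perm_eq (E (q^a*m)) [seq q^b * d | b <- divisors a, d <- E m].
Proof.
move=> pq a0 m0 qm.
have q0 : 0 < q by apply: prime_gt0.
have qa0 : 0 < q ^ a by rewrite expn_gt0 q0.
have n0 : 0 < q ^ a * m by rewrite muln_gt0 qa0.
have cop d : d %| m -> coprime q d.
  move=> dm; rewrite prime_coprime //; apply: contra qm => qd; exact: dvdn_trans dm.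
apply: uniq_perm.
- exact/filter_uniq/divisors_uniq.
- apply: allpairs_uniq; first exact: divisors_uniq.
    exact/filter_uniq/divisors_uniq.
  move=> [b1 d1] [b2 d2] /allpairsP[[x y] /= [xa ym [-> ->]]].
  move=> /allpairsP[[x' y'] /= [xa' ym' [-> ->]]] /= Heq.
  move: ym ym'; rewrite !memE // /ediv => /andP[dm _] /andP[dm' _].
  have y0 : 0 < y by apply: dvdn_gt0 m0 dm.
  have y0' : 0 < y' by apply: dvdn_gt0 m0 dm'.
  have ex : x = x'.
    have := congr1 (logn q) Heq.
    by rewrite !lognM ?expn_gt0 ?q0 // !pfactorK // !logn_coprime ?cop // !addn0.
  subst x'; congr (_, _).
  by apply/eqP; rewrite -(@eqn_pmul2l (q ^ x)) ?expn_gt0 ?q0 //; apply/eqP.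
move=> d; rewrite memE //; apply/idP/allpairsP.
- case/andP=> dn /allP Hall.
  have d0 : 0 < d by apply: dvdn_gt0 n0 dn.
  have [d' cd' ed] := pfactor_coprime pq d0.
  have d'0 : 0 < d' by move: d0; rewrite ed muln_gt0 => /andP[].
  have d'm : d' %| m.
    rewrite -(Gauss_dvdl _ (_ : coprime d' (q ^ a))) 1?mulnC.
      by apply: dvdn_trans dn; rewrite ed dvdn_mulr.
    by rewrite coprime_sym coprimeXl.
  have qn : q \in primes (q ^ a * m) by rewrite mem_primes pq n0 dvdn_mulr // dvdn_exp.
  have Hlogn : logn q (q ^ a * m) = a.
    by rewrite lognM ?expn_gt0 ?q0 // pfactorK // logn_coprime ?addn0 // prime_coprime.
  have Hq := Hall q qn; rewrite Hlogn in Hq.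
  have logj j k x : 0 < x -> j != q -> logn j (q ^ k * x) = logn j x.
    move=> x0 jq; rewrite lognM ?expn_gt0 ?q0 // lognX logn_prime //.
    by rewrite (negbTE jq) muln0.
  exists (logn q d, d'); split => /=.
  + by rewrite -dvdn_divisors.
  + rewrite memE // /ediv d'm /=; apply/allP => j jm.
    have jq : j != q by apply: contraNneq qm => <-; move: jm; rewrite mem_primes => /and3P[].
    have jn : j \in primes (q ^ a * m) by rewrite primesM ?jm ?orbT.
    by have := Hall j jn; rewrite /= logj // ed mulnC logj.
  + by rewrite {1}ed mulnC.
case=> [[b d']] /= [ba d'E ->].
move: d'E; rewrite memE // /ediv => /andP[d'm /allP Hall].
have d'0 : 0 < d' by apply: dvdn_gt0 m0 d'm.
have a0' : 0 < a := a0.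
move: ba; rewrite -dvdn_divisors // => ba.
have logj j k x : 0 < x -> j != q -> logn j (q ^ k * x) = logn j x.
  move=> x0 jq; rewrite lognM ?expn_gt0 ?q0 // lognX logn_prime //.
  by rewrite (negbTE jq) muln0.
rewrite /ediv dvdn_mul ?dvdn_exp2l ?(dvdn_leq a0) //=.
apply/allP => j; rewrite primesM ?expn_gt0 ?q0 // => /orP[].
  rewrite mem_primes => /and3P[pj _ jq]; have /eqP -> : j == q.
    by rewrite -dvdn_prime2 // (Euclid_dvdX _ _ pj) in jq *; case/andP: jq.
  rewrite !lognM ?expn_gt0 ?q0 // !pfactorK // !logn_coprime ?addn0 ?cop // prime_coprime.
move=> jm.
have jq : j != q by apply: contraNneq qm => <-; move: jm; rewrite mem_primes => /and3P[].
rewrite !logj //; exact: Hall.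
Qed.

Lemma fact_ind (P : nat -> Prop) : P 1 ->
  (forall q a m, prime q -> 0 < a -> 0 < m -> ~~ (q %| m) -> P m -> P (q ^ a * m)) ->
  forall n, 0 < n -> P n.
Proof.
move=> P1 Hs n; elim: n {-2}n (leqnn n) => [|N IH] n nN n0; first by case: n nN n0.
case: (ltngtP n 1) => [|n1|->] //; first by case: n n0 {nN} => // [[]].
have pq := pdiv_prime n1; set q := pdiv n in pq *.
have n0' : 0 < n by apply: ltnW.
have [m cm en] := pfactor_coprime pq n0'.
set a := logn q n in en.
have m0 : 0 < m by move: n0'; rewrite en muln_gt0 => /andP[].
have qn : q \in primes n by rewrite mem_primes pq n0' pdiv_dvd.
have a0 : 0 < a by rewrite logn_gt0.
have mn : m < n.
  rewrite en ltn_Pmulr //; apply: leq_trans (prime_gt1 pq) _.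
  by rewrite -{1}(expn1 q) leq_exp2l ?prime_gt1.
have -> : n = q ^ a * m by rewrite en mulnC.
apply: Hs => //; first by rewrite -prime_coprime.
apply: IH => //; rewrite -ltnS; exact: leq_trans mn nN.
Qed.

Section Sums.
Variables (q a m : nat).
Hypotheses (pq : prime q) (a0 : 0 < a) (m0 : 0 < m) (qm : ~~ (q %| m)).

Lemma sumE_decomp (F : nat -> nat) :
  \sum_(d <- E (q ^ a * m)) F d = \sum_(b <- divisors a) \sum_(d <- E m) F (q ^ b * d).
Proof.
by rewrite (perm_big _ (E_decomp pq a0 m0 qm)) big_allpairs_dep.
Qed.

Lemma prod_primes_decomp (G : nat -> nat -> nat) :
  \prod_(j <- primes (q ^ a * m)) G j (logn j (q ^ a * m)) =
  G q a * \prod_(j <- primes m) G j (logn j m).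
Proof.
have q0 : 0 < q by apply: prime_gt0.
have qa0 : 0 < q ^ a by rewrite expn_gt0 q0.
have Hp : perm_eq (primes (q ^ a * m)) (q :: primes m).
  apply: uniq_perm; rewrite ?primes_uniq //=.
    by rewrite primes_uniq andbT mem_primes pq m0.
  move=> j; rewrite primesM // in_cons; congr (_ || _).
  rewrite mem_primes qa0 /=; apply/idP/eqP => [/andP[pj jq]|->]; last by rewrite pq dvdn_exp.
  by apply/eqP; rewrite -dvdn_prime2 //; move: jq; rewrite Euclid_dvdX // => /andP[].
rewrite (perm_big _ Hp) big_cons; congr (G _ _ * _).
  by rewrite lognM // pfactorK // logn_coprime ?addn0 // prime_coprime.
rewrite big_seq [RHS]big_seq; apply: eq_bigr => j jm.
have jq : j != q by apply: contraNneq qm => <-; move: jm; rewrite mem_primes => /and3P[].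
by rewrite lognM // lognX logn_prime // (negbTE jq) muln0.
Qed.
End Sums.

Lemma sizeE n : 0 < n -> size (E n) = \prod_(j <- primes n) ndiv (logn j n).
Proof.
move: n; apply: fact_ind => [|q a m pq a0 m0 qm IH].
  by rewrite big_nil. rewrite -sum1_size (sumE_decomp pq a0 m0 qm (fun _ => 1)) (prod_primes_decomp pq a0 m0 qm (fun _ x => ndiv x)).
rewrite -IH.
under eq_bigr do rewrite sum1_size.
by rewrite big_const_seq count_predT iter_addn_0 mulnC.
Qed.

Lemma sumlog0 n r : 0 < n -> r \notin primes n -> \sum_(d <- E n) logn r d = 0.
Proof.
move=> n0 rn; rewrite big_seq big1 // => d; rewrite memE // => /andP[dn _].
have l0 : logn r n = 0 by apply/eqP; rewrite -leqn0 leqNgt logn_gt0.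
by apply/eqP; rewrite -leqn0 -l0 dvdn_leq_log.
Qed.

Lemma sumlog n : 0 < n -> forall r, r \in primes n ->
  \sum_(d <- E n) logn r d =
  sigma (logn r n) * \prod_(j <- primes n) (if j != r then ndiv (logn j n) else 1).
Proof.
move: n; apply: fact_ind => [|q a m pq a0 m0 qm IH] r.
  by rewrite in_nil.
have q0 : 0 < q by apply: prime_gt0.
have qa0 : 0 < q ^ a by rewrite expn_gt0 q0.
move=> rn.
rewrite (sumE_decomp pq a0 m0 qm (logn r)).
rewrite (prod_primes_decomp pq a0 m0 qm (fun j x => if j != r then ndiv x else 1)).
have Hl b : \sum_(d <- E m) logn r (q ^ b * d) = size (E m) * (b * (r == q)) + \sum_(d <- E m) logn r d.
  rewrite -sum1_size big_distrl /= -big_split /= big_seq [RHS]big_seq.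
  apply: eq_bigr => d; rewrite memE // => /andP[dm _].
  by rewrite lognM ?expn_gt0 ?q0 ?(dvdn_gt0 m0 dm) // lognX logn_prime // mul1n.
under eq_bigr do rewrite Hl.
have lognn : logn r (q ^ a * m) = (if r == q then a else logn r m).
  rewrite lognM // lognX logn_prime //; case: eqP => [->|_].
    by rewrite logn_coprime ?addn0 ?muln1 // prime_coprime.
  by rewrite muln0.
rewrite lognn; case: eqP => [erq|/eqP nrq].
  subst r; rewrite eqxx sumlog0 //; last by rewrite mem_primes pq m0.
  under eq_bigr do rewrite muln1 addn0.
  rewrite -big_distrr /= mul1n sizeE // mulnC /sigma; congr (_ * _).
  rewrite big_seq [RHS]big_seq; apply: eq_bigr => j jm.
  have jq : j != q.
    by apply: contraNneq qm => <-; move: jm; rewrite mem_primes => /and3P[].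
  by rewrite jq.
have rm : r \in primes m.
  move: rn; rewrite primesM // => /orP[] //; rewrite mem_primes => /and3P[pr _].
  by rewrite Euclid_dvdX // dvdn_prime2 // (negbTE nrq).
rewrite (IH r rm) eq_sym (negbTE nrq).
under eq_bigr do rewrite /= !muln0 add0n.
by rewrite big_const_seq count_predT iter_addn_0 /= /ndiv -mulnA (mulnC (size _)).
Qed.

Lemma arith a s P p : prime p -> 0 < a -> a < s -> 0 < P -> s * P = a * p ->
  s = gcdn a s * p /\ a = gcdn a s * P.
Proof.
move=> pp a0 las P0 E.
set g := gcdn a s.
have g0 : 0 < g by rewrite gcdn_gt0 a0.
have [ga gs] : g %| a /\ g %| s by split; [apply: dvdn_gcdl | apply: dvdn_gcdr].
set a' := a %/ g; set s' := s %/ g.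
have ea : a = a' * g by rewrite divnK.
have es : s = s' * g by rewrite divnK.
have cop : coprime a' s'.
  rewrite /coprime; apply/eqP.
  have : gcdn a' s' * g = g by rewrite muln_gcdl -ea -es.
  by move/eqP; rewrite -{2}(mul1n g) eqn_pmul2r // => /eqP.
have E' : s' * P = a' * p.
  apply/eqP; rewrite -(eqn_pmul2r g0); apply/eqP.
  by rewrite mulnAC -es mulnAC -ea.
have a'0 : 0 < a' by move: a0; rewrite ea muln_gt0 => /andP[].
have dP : a' %| P by rewrite -(Gauss_dvdr _ cop) E' dvdn_mulr.
set k := P %/ a'.
have eP : P = k * a' by rewrite divnK.
have ek : s' * k = p.
  apply/eqP; rewrite -(eqn_pmul2r a'0); apply/eqP.
  by rewrite -mulnA -eP E' mulnC.
have kp : k %| p by rewrite -ek dvdn_mull.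
case/primeP: pp => p1 /(_ k kp) /orP[/eqP k1|/eqP kp'].
  rewrite k1 muln1 in ek; split; first by rewrite es ek mulnC.
  by rewrite ea eP k1 mul1n mulnC.
exfalso; rewrite kp' in ek.
have s1 : s' = 1.
  apply/eqP; rewrite -(eqn_pmul2r (ltnW p1)) mul1n; apply/eqP; exact: ek.
have : s <= a by rewrite es s1 mul1n; apply: dvdn_leq.
by rewrite leqNgt las.
Qed.

Lemma sigma1 : sigma 1 = 1.
Proof. by rewrite /sigma (_ : divisors 1 = [:: 1]) // big_cons big_nil. Qed.
Lemma ndiv1 : ndiv 1 = 1.
Proof. by []. Qed.

Lemma sigma_gt a : 1 < a -> a < sigma a.
Proof.
move=> a1; have a0 : 0 < a by apply: ltnW.
rewrite /sigma (big_rem a) ?divisors_id //= -addn1 leq_add2l.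
rewrite (big_rem 1) ?divisor1 //=.
by rewrite mem_rem_uniq ?divisors_uniq // inE divisor1 andbT neq_ltn a1.
Qed.

Lemma sigma_lt a : 1 < a -> sigma a < ndiv a * a.
Proof.
move=> a1; have a0 : 0 < a by apply: ltnW.
have -> : ndiv a * a = \sum_(d <- divisors a) (d + (a - d)).
  rewrite big_seq (eq_bigr (fun _ => a)) -?big_seq.
    by rewrite big_const_seq count_predT iter_addn_0 mulnC.
  by move=> d; rewrite -dvdn_divisors // => /(dvdn_leq a0) da; rewrite subnKC.
rewrite big_split /= -{1}(addn0 (sigma a)) ltn_add2l.
rewrite (big_rem 1) ?divisor1 //=.
by rewrite addn_gt0 subn_gt0 a1.
Qed.

Lemma ndiv_ge2 a : 1 < a -> 2 <= ndiv a.
Proof.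
move=> a1; have a0 : 0 < a by apply: ltnW.
have -> : 2 = size [:: 1; a] by [].
apply: uniq_leq_size; first by rewrite /= inE andbT neq_ltn a1.
by move=> x; rewrite !inE => /orP[] /eqP ->; rewrite ?divisor1 ?divisors_id.
Qed.

Lemma ndiv_gt0 a : 0 < ndiv a.
Proof.
have -> : 1 = size [:: 1] by [].
by apply: uniq_leq_size => // x; rewrite inE => /eqP ->; rewrite divisor1.
Qed.

Lemma prod_pos (s : seq nat) : all (fun d => 0 < d) s -> 0 < \prod_(d <- s) d.
Proof.
elim: s => [|x s IH] /=; first by rewrite big_nil.
by case/andP=> x0 hs; rewrite big_cons muln_gt0 x0 IH.
Qed.

Lemma logn_prod (s : seq nat) r : all (fun d => 0 < d) s ->
  logn r (\prod_(d <- s) d) = \sum_(d <- s) logn r d.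
Proof.
elim: s => [|x s IH] /=; first by rewrite !big_nil logn1.
case/andP=> x0 hs; rewrite !big_cons lognM ?IH ?prod_pos //.
Qed.

Lemma Epos n : 0 < n -> all (fun d => 0 < d) (E n).
Proof.
by move=> n0; apply/allP => d; rewrite memE // => /andP[dn _]; apply: dvdn_gt0 dn.
Qed.

Lemma Te_crit n p : 0 < n -> (Te n = n ^ p <-> forall r, r \in primes n ->
  sigma (logn r n) * \prod_(j <- primes n | j != r) ndiv (logn j n) = logn r n * p).
Proof.
move=> n0; have TeE : Te n = \prod_(d <- E n) d by rewrite /Te big_filter.
have T0 : 0 < Te n by rewrite TeE prod_pos ?Epos.
split.
  move=> H r rn; have := congr1 (logn r) H.
  rewrite TeE logn_prod ?Epos // sumlog // lognX => E'.
  by rewrite big_mkcond E' mulnC.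
move=> H; apply: eqn_from_log => //; first by rewrite expn_gt0 n0.
move=> r; rewrite TeE logn_prod ?Epos // lognX.
case: (boolP (r \in primes n)) => rn.
  by rewrite sumlog // -big_mkcond H // mulnC.
have l0 : logn r n = 0 by apply/eqP; rewrite -leqn0 leqNgt logn_gt0.
by rewrite sumlog0 // l0 muln0.
Qed.

Lemma prod_ge2 (s : seq nat) (P : pred nat) F :
  (forall j, j \in s -> P j -> 1 < F j) -> 2 ^ count P s <= \prod_(j <- s | P j) F j.
Proof.
elim: s => [|x s IH] H /=; first by rewrite big_nil.
have IH' : 2 ^ count P s <= \prod_(j <- s | P j) F j.
  by apply: IH => j js; apply: H; rewrite inE js orbT.
rewrite big_cons; case Px: (P x) => /=.
  by rewrite expnS leq_mul // H // mem_head.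
by [].
Qed.

Theorem mainTheorem4 (p n : nat) (hp : prime p) (hn : 1 < n) :
  (Te n = n ^ p <->
   (forall q, q \in primes n ->
      let a := logn q n in
      let g := gcdn a (sigma a) in
      let P := \prod_(j <- primes n | j != q) ndiv (logn j n) in
      [/\ sigma a = g * p, a = g * P & 2 ^ (size (primes n)).-1 <= P < p]))
  /\
  (size (primes n) = 1 -> Te n = n ^ p ->
     forall q, q \in primes n ->
       logn q n %| sigma (logn q n) /\ sigma (logn q n) = logn q n * p).
Proof.
have n0 : 0 < n by apply: ltnW.
have p1 := prime_gt1 hp.
have Q0 r : 0 < \prod_(j <- primes n | j != r) ndiv (logn j n).
  by apply: prodn_cond_gt0 => j _; apply: ndiv_gt0.
have a0 r : r \in primes n -> 0 < logn r n by rewrite logn_gt0.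
have DE r : r \in primes n -> \prod_(j <- primes n) ndiv (logn j n) =
    ndiv (logn r n) * \prod_(j <- primes n | j != r) ndiv (logn j n).
  by move=> rn; rewrite (bigD1_seq r) ?primes_uniq.
have fwd : Te n = n ^ p -> forall q, q \in primes n ->
      let a := logn q n in
      let g := gcdn a (sigma a) in
      let P := \prod_(j <- primes n | j != q) ndiv (logn j n) in
      [/\ sigma a = g * p, a = g * P & 2 ^ (size (primes n)).-1 <= P < p].
  move/(Te_crit p n0) => C.
  have ge2 r : r \in primes n -> 1 < logn r n.
    move=> rn; rewrite ltn_neqAle eq_sym a0 // andbT; apply/eqP => ar1.
    have := C r rn; rewrite ar1 sigma1 !mul1n => Qp.
    have Dp := DE r rn; rewrite ar1 ndiv1 mul1n Qp in Dp.
    case: (boolP (all (fun j => logn j n == 1) (primes n))) => [/allP Hall|].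
      move: Dp; rewrite big_seq big1 => [Dp|j jn]; first by move: p1; rewrite -Dp.
      by rewrite (eqP (Hall j jn)) ndiv1.
    case/allPn => j jn aj1.
    have aj : 1 < logn j n by rewrite ltn_neqAle eq_sym aj1 a0.
    have Cj := C j jn; have Dj := DE j jn; rewrite Dp in Dj.
    have lt := sigma_lt aj.
    have Qj := Q0 j.
    by move: lt; rewrite -(ltn_pmul2r Qj) Cj -mulnA mulnCA -Dj ltnn.
  move=> q qn /=.
  have [E1 E2] := arith hp (a0 q qn) (sigma_gt (ge2 q qn)) (Q0 q) (C q qn).
  split => //; apply/andP; split.
    have cnt : count (predC (pred1 q)) (primes n) = (size (primes n)).-1.
      have := count_predC (pred1 q) (primes n).
      by rewrite count_uniq_mem ?primes_uniq // qn add1n => <-.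
    have H2 := @prod_ge2 (primes n) (predC (pred1 q)) (fun j => ndiv (logn j n))
      (fun j jn _ => ndiv_ge2 (ge2 j jn)).
    by rewrite cnt in H2.
  have g0 : 0 < gcdn (logn q n) (sigma (logn q n)) by rewrite gcdn_gt0 a0.
  by have := sigma_gt (ge2 q qn); rewrite {1}E2 {2}E1 ltn_pmul2l.
split; last first.
  move=> s1 /fwd H q qn; have := H q qn; cbv zeta; case=> E1 E2 _.
  have hs : primes n = [:: q].
    move: s1 qn; case: (primes n) => [|x [|y t]] //= _.
    by rewrite inE => /eqP ->.
  move: E2; rewrite hs big_cons eqxx /= big_nil muln1 => E2.
  split; last by rewrite {1}E1 -E2.
  by rewrite {1}E2; apply: dvdn_gcdr.
split => // H; apply: (proj2 (Te_crit p n0)) => r rn.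
have := H r rn; cbv zeta; case=> E1 E2 _.
by rewrite [in LHS]E1 [in RHS]E2 mulnAC.
Qed.
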